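(* Let $k\geq 2$ be an integer. The generating function $\sum_{n\geq 0} h_{n,k}x^n$, where $h_{n,k}$ is the number of Hertzsprung words of length $n$ over $k$, equals \[\left(1-\frac{kx}{1+3x}-\frac{2x^{2}}{(1+3x)^{2}}\cdot\frac{U_{k}\!\left(-\frac{1+x}{2x}\right)-U_{k-1}\!\left(-\frac{1+x}{2x}\right)-1}{U_{k}\!\left(-\frac{1+x}{2x}\right)}\right)^{-1}.\]
   Context: For an integer $k\geq 2$, $[k]=\{1,\ldots,k\}$ and a word over $k$ of length $n$ is an element $w=w_1\cdots w_n\in[k]^n$ (including the empty word for $n=0$). $\mathrm{s}(w)$ is the number of indices $1\leq i\leq n-1$ with $|w_{i+1}-w_i|\leq 1$. A word $w$ is called Hertzsprung if $\mathrm{s}(w)=0$, i.e., any two consecutive letters differ by at least $2$. $U_n$ denotes the Chebyshev polynomial of the second kind: $U_0(x)=1$, $U_1(x)=2x$, $U_{n+1}(x)=2xU_n(x)-U_{n-1}(x)$. *)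

(* Defs.v *)
From mathcomp Require Import all_boot.
From Stdlib Require Import Reals.

Set Implicit Arguments.
Unset Strict Implicit.
Unset Printing Implicit Defensive.

(* s(w): number of indices 1 <= i <= n-1 with |w_{i+1} - w_i| <= 1
   (0-based here: i < n-1, comparing w_i and w_{i+1}). Natural-number
   distance |a - b| is (a - b) + (b - a) with truncated subtraction. *)
Definition s_stat (w : seq nat) : nat :=
  count (fun i => (nth 0 w i.+1 - nth 0 w i) + (nth 0 w i - nth 0 w i.+1) <= 1)
        (iota 0 (size w).-1).

Definition hertzsprung (w : seq nat) : bool := s_stat w == 0.

(* A word of length n over [k] is an n-tuple of letters; the letter
   i : 'I_k represents the integer i+1 in [k] = {1,...,k}. *)
Definition word_val (k n : nat) (w : n.-tuple 'I_k) : seq nat :=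
  [seq (nat_of_ord i).+1 | i <- w].

Definition h (n k : nat) : nat :=
  #|[set w : n.-tuple 'I_k | hertzsprung (word_val w)]|.

(* Chebyshev polynomials of the second kind, evaluated on reals:
   U_0 = 1, U_1 = 2x, U_{n+1} = 2x U_n - U_{n-1}. *)
Fixpoint Upair (n : nat) (x : R) : R * R :=
  match n with
  | O => (1%R, (2 * x)%R)
  | S m => let p := Upair m x in (snd p, (2 * x * snd p - fst p)%R)
  end.

Definition U (n : nat) (x : R) : R := fst (Upair n x).

(* Main.v *)
Require Import Defs.
From mathcomp Require Import all_boot.
From Stdlib Require Import Reals.
From mathcomp Require Import zify.
From Stdlib Require Import Lra Lia.
Set Implicit Arguments. Unset Strict Implicit. Unset Printing Implicit Defensive.

Definition near (a b : nat) : bool := (b - a) + (a - b) <= 1.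

Lemma s_stat_cons2 a b w : s_stat [:: a, b & w] = near a b + s_stat (b :: w).
Proof.
rewrite /s_stat /= (iotaDl 1 0) count_map.
congr (_ + _); apply: eq_count => i /=; by [].
Qed.

Lemma hz_cons2 a b w : hertzsprung [:: a, b & w] = ~~ near a b && hertzsprung (b :: w).
Proof. rewrite /hertzsprung s_stat_cons2; by case: (near a b). Qed.

Lemma card_tuple_cons (T : finType) n (P : pred (n.+1.-tuple T)) :
  #|[set w | P w]| = \sum_(t : T) #|[set w : n.-tuple T | P (cons_tuple t w)]|.
Proof.
rewrite -sum1_card.
rewrite (reindex (fun p : T * n.-tuple T => cons_tuple p.1 p.2)); last first.
  exists (fun w : n.+1.-tuple T => (thead w, behead_tuple w)).
    by move=> [t w] _ /=; rewrite theadE; congr pair; apply: val_inj.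
  by move=> w _ /=; rewrite [RHS]tuple_eta.
rewrite (eq_bigr (fun t => \sum_(w | w \in [set w : n.-tuple T | P (cons_tuple t w)]) 1)); last by move=> t _; rewrite sum1_card.
rewrite pair_big_dep /=.
by apply: eq_bigl => p; rewrite !inE.
Qed.

Fixpoint g (k n j : nat) : nat :=
  match n with
  | 0 => if (0 < j) && (j <= k) then 1 else 0
  | n'.+1 => if (0 < j) && (j <= k) then \sum_(i < k | ~~ near j i.+1) g k n' i.+1 else 0
  end.

Lemma card_g k n j : 0 < j <= k ->
  #|[set w : n.-tuple 'I_k | hertzsprung (j :: word_val w)]| = g k n j.
Proof.
elim: n j => [|n IH] j hj.
  rewrite /= hj.
  have -> : [set w : 0.-tuple 'I_k | hertzsprung (j :: word_val w)] = setT.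
    by apply/setP => w; rewrite !inE; case: w => [[|]].
  by rewrite cardsT card_tuple.
rewrite card_tuple_cons [g _ _ _]/= hj [RHS]big_mkcond; apply: eq_bigr => t _.
have ht : 0 < t.+1 <= k by rewrite /= ltn_ord.
case: ifP => hn.
  rewrite -(IH _ ht); apply: eq_card => w; rewrite !inE /word_val /= hz_cons2 hn //.
apply/eqP; rewrite cards_eq0; apply/eqP/setP => w; rewrite !inE /word_val /= hz_cons2 hn //.
Qed.

Lemma h0 k : h 0 k = 1.
Proof.
rewrite /h.
have -> : [set w : 0.-tuple 'I_k | hertzsprung (word_val w)] = setT.
  by apply/setP => w; rewrite !inE; case: w => [[|]].
by rewrite cardsT card_tuple.
Qed.

Lemma hS k n : h n.+1 k = \sum_(t < k) g k n t.+1.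
Proof.
rewrite /h card_tuple_cons; apply: eq_bigr => t _.
rewrite -card_g ?ltn_ord //.
Qed.

Lemma g_out k n j : ~~ ((0 < j) && (j <= k)) -> g k n j = 0.
Proof. by case: n => [|n] /= /negbTE ->. Qed.

Lemma g_le k n j : g k n j <= expn k n.
Proof.
elim: n j => [|n IH] j /=; first by case: ifP.
case: ifP => // _.
apply: (@leq_trans (\sum_(i < k) expn k n)).
  rewrite [X in X <= _]big_mkcond; apply: leq_sum => i _; case: ifP => // _; exact: IH.
by rewrite sum_nat_const card_ord expnS.
Qed.

Lemma near_sum k (F : nat -> nat) j : F 0 = 0 -> F k.+1 = 0 -> 0 < j <= k ->
  \sum_(i < k | near j i.+1) F i.+1 = F j.-1 + F j + F j.+1.
Proof.
move=> F0 Fk hj.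
set G := fun i => if near j i then F i else 0.
have -> : \sum_(i < k | near j i.+1) F i.+1 = \sum_(0 <= i < k.+2) G i.
  rewrite big_mkord big_ord_recl big_ord_recr /= /G F0 Fk !if_same add0n addn0.
  by rewrite big_mkcond.
rewrite (big_cat_nat (n := j.-1)); [|lia|lia].
rewrite (big_cat_nat (m := j.-1) (n := j.+2)); [|lia|lia].
rewrite [X in X + _ = _]big1_seq; last first.
  move=> i; rewrite mem_iota => /andP [_ hi]; rewrite /G.
  have -> : near j i = false by apply/negbTE; rewrite /near -ltnNge; lia.
  by [].
rewrite [X in _ + (_ + X) = _]big1_seq; last first.
  move=> i; rewrite mem_iota => /andP [hi1 hi]; rewrite /G.
  have -> : near j i = false by apply/negbTE; rewrite /near -ltnNge; lia.
  by [].
have e : j.+2 = (j.-1).+3 by lia.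
rewrite e big_nat_recr; last by lia.
rewrite big_nat_recr; last by lia.
rewrite big_nat_recr; last by lia.
rewrite big_geq // /G.
have -> : (j.-1).+1 = j by lia.
have -> : near j j.-1 by rewrite /near; lia.
have -> : near j j by rewrite /near; lia.
have -> : near j j.+1 by rewrite /near; lia.
rewrite /=; lia.
Qed.

Lemma g_rec k n j : 0 < j <= k ->
  g k n.+1 j + g k n j.-1 + g k n j + g k n j.+1 = \sum_(t < k) g k n t.+1.
Proof.
move=> hj.
rewrite [g k n.+1 j]/= hj.
rewrite [RHS](bigID (fun i : 'I_k => ~~ near j i.+1)) /= -!addnA; congr (_ + _).
rewrite !addnA.
under [RHS]eq_bigl do rewrite negbK.
rewrite near_sum //; apply: g_out; lia.
Qed.

Open Scope R_scope.

Unset Implicit Arguments.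

Fixpoint sumR (m : nat) (f : nat -> R) : R :=
  match m with O => 0 | S m' => sumR m' f + f m' end.

Lemma sumR_shift m f : sumR (S m) f = f O + sumR m (fun t => f (S t)).
Proof. induction m; simpl in *. ring. rewrite IHm; ring. Qed.

Lemma sumR_ext m f g : (forall t, (t < m)%coq_nat -> f t = g t) -> sumR m f = sumR m g.
Proof. induction m; intros E; simpl; auto. rewrite IHm. rewrite E. auto. lia. intros; apply E; lia. Qed.

Lemma sumR_lin m f g h a b c :
  sumR m (fun t => a * f t + b * g t + c * h t) = a * sumR m f + b * sumR m g + c * sumR m h.
Proof. induction m; simpl. ring. rewrite IHm; ring. Qed.

Lemma sumR_const m c : sumR m (fun _ => c) = INR m * c.
Proof. induction m; simpl sumR. simpl; ring. rewrite IHm S_INR; ring. Qed.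

Lemma U_rec m y : U (S (S m)) y = 2 * y * U (S m) y - U m y.
Proof. reflexivity. Qed.
Lemma U0 y : U 0 y = 1. Proof. reflexivity. Qed.
Lemma U1 y : U 1 y = 2 * y. Proof. reflexivity. Qed.

Lemma cassini m y : U (S m) y ^ 2 - U (S (S m)) y * U m y = 1.
Proof.
induction m. rewrite U_rec U1 U0. ring.
rewrite (U_rec (S m)) U_rec. rewrite U_rec in IHm. nra.
Qed.

Fixpoint qpair (m : nat) (y : R) : R * R :=
  match m with O => (0, 1) | S m' => let p := qpair m' y in (snd p, 2 * y * snd p - fst p + 1) end.
Definition q m y := fst (qpair m y).
Lemma q_rec m y : q (S (S m)) y = 2 * y * q (S m) y - q m y + 1. Proof. reflexivity. Qed.
Lemma q0 y : q 0 y = 0. Proof. reflexivity. Qed.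
Lemma q1 y : q 1 y = 1. Proof. reflexivity. Qed.

Definition uu m y := match m with O => 0 | S m' => U m' y end.
Lemma uu_rec m y : uu (S (S (S m))) y = 2 * y * uu (S (S m)) y - uu (S m) y.
Proof. reflexivity. Qed.

Lemma uu_rec2 m y : uu (S (S m)) y = 2 * y * uu (S m) y - uu m y.
Proof. destruct m. rewrite /uu /U /=; ring. apply: uu_rec. Qed.

Lemma q_closed m y : (2 - 2 * y) * q m y = 1 - uu (S m) y + uu m y
  /\ (2 - 2 * y) * q (S m) y = 1 - uu (S (S m)) y + uu (S m) y.
Proof.
induction m.
- split; rewrite /uu /q /U /=; ring.
- destruct IHm as [A B]; split; auto.
  rewrite q_rec uu_rec.
  replace ((2 - 2 * y) * (2 * y * q (S m) y - q m y + 1)) with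
    (2 * y * ((2 - 2 * y) * q (S m) y) - (2 - 2 * y) * q m y + (2 - 2 * y)) by ring.
  rewrite A B (uu_rec2 m y); ring.
Qed.

Lemma G_closed (G : nat -> R) (c y : R) (k : nat) :
  (forall j : nat, (0 < j <= k)%nat -> G (S j) = c + 2 * y * G j - G (j - 1)%nat) ->
  G O = 0 ->
  forall m : nat, (m <= k)%nat -> G (S m) = G 1%nat * U m y + c * q m y.
Proof.
intros HG G0.
assert (forall m : nat, (m < k)%nat -> G (S m) = G 1%nat * U m y + c * q m y /\
          G (S (S m)) = G 1%nat * U (S m) y + c * q (S m) y).
{ induction m; intros Hm.
  - split. rewrite U0 q0; ring.
    rewrite HG; [|lia]. simpl (1 - 1)%nat. rewrite G0 U1 q1. ring.
  - destruct IHm as [A B]. lia. split; auto.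
    rewrite HG; [|lia]. replace (S (S m) - 1)%nat with (S m) by lia.
    rewrite B A U_rec q_rec. ring. }
intros m Hm. destruct m. rewrite U0 q0; ring.
apply H. lia.
Qed.

Lemma main_alg (k : nat) (x H T : R) (G : nat -> R) :
  (2 <= k)%nat -> x <> 0 -> 1 + 3 * x <> 0 ->
  U k (- ((1 + x) / (2 * x))) <> 0 ->
  G O = 0 -> G (S k) = 0 ->
  (forall j : nat, (0 < j <= k)%nat -> G j = 1 + x * (T - G (j - 1)%nat - G j - G (S j))) ->
  T = sumR k (fun t => G (S t)) -> H = 1 + x * T ->
  H * (1 - INR k * x / (1 + 3 * x)
              - (2 * x ^ 2) / ((1 + 3 * x) ^ 2)
                * ((U k (- ((1 + x) / (2 * x))) - U (k - 1) (- ((1 + x) / (2 * x))) - 1)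
                   / U k (- ((1 + x) / (2 * x))))) = 1.
Proof.
set y := - ((1 + x) / (2 * x)).
intros hk hx h3 hu G0 Gk HG HT HH.
set c := H / x.
assert (hc : x * c = H) by (unfold c; field; auto).
assert (hz : x * (2 - 2 * y) = 1 + 3 * x) by (unfold y; field; auto).
assert (Hrec : forall j : nat, (0 < j <= k)%nat -> G (S j) = c + 2 * y * G j - G (j - 1)%nat).
{ intros j hj. pose proof (HG j hj) as E.
  assert (E2 : x * G (S j) = H - x * G (j - 1)%nat - (1 + x) * G j) by lra.
  apply (Rmult_eq_reg_l x); auto.
  rewrite E2. unfold c, y. field. auto. }
pose proof (G_closed G c y k Hrec G0) as GC.
destruct k as [|[|m]]; [lia|lia|].
replace (S (S m) - 1)%nat with (S m) by lia.
assert (Hsum : (1 + 3 * x) * T = INR (S (S m)) * H + x * (G 1%nat + G (S (S m)))).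
{ assert (E : sumR (S (S m)) (fun t => (1 + x) * G (S t) + x * G t + x * G (S (S t)))
            = sumR (S (S m)) (fun _ => H)).
  { apply sumR_ext. intros t ht. pose proof (HG (S t)) as E. 
    replace (S t - 1)%nat with t in E by lia. specialize (E ltac:(lia)). rewrite HH. lra. }
  rewrite sumR_lin sumR_const in E.
  assert (E1 : sumR (S (S m)) G = T - G (S (S m))).
  { rewrite HT sumR_shift G0. simpl. ring. }
  assert (E3 : sumR (S (S m)) (fun t => G (S (S t))) = T - G 1%nat).
  { rewrite HT (sumR_shift (S m) (fun t => G (S t))). simpl. rewrite Gk. ring. }
  rewrite E1 E3 -HT in E. lra. }
pose proof (GC (S (S m)) (leqnn _)) as Ea. rewrite Gk in Ea.
pose proof (GC (S m) (leqnSn _)) as Eb.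
destruct (q_closed (S m) y) as [Ec Ed].
simpl uu in Ec. simpl uu in Ed.
pose proof (cassini m y) as Cas.
set u := U (S (S m)) y in Ea Ec Ed Cas hu *.
set v := U (S m) y in Eb Ec Ed Cas *.
set w := U m y in Ec Cas *.
set Q1 := q (S m) y in Eb Ec. set Q2 := q (S (S m)) y in Ea Ed.
set G1 := G 1%nat in Ea Eb Hsum.
set Gk' := G (S (S m)) in Eb Hsum *.
assert (E2 : (G1 + Gk') * (1 + 3 * x) * u = 2 * H * (u - v - 1)).
{ rewrite Eb -hz -hc.
  assert (Ea' : G1 * u = - (c * Q2)) by lra.
  replace ((G1 + (G1 * v + c * Q1)) * (x * (2 - 2 * y)) * u)
    with (x * ((G1 * u) * (1 + v) * (2 - 2 * y) + c * ((2 - 2 * y) * Q1) * u)) by ring.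
  rewrite Ea' Ec.
  replace (x * (- (c * Q2) * (1 + v) * (2 - 2 * y) + c * (1 - v + w) * u))
    with (x * c * (- ((2 - 2 * y) * Q2) * (1 + v) + (1 - v + w) * u)) by ring.
  rewrite Ed.
  replace (- (1 - u + v) * (1 + v) + (1 - v + w) * u)
    with (2 * (u - v - 1) + (1 - (v ^ 2 - u * w))) by ring.
  rewrite Cas. ring. }
assert (N : H * ((1 + 3 * x) ^ 2 * u - INR (S (S m)) * x * (1 + 3 * x) * u - 2 * x ^ 2 * (u - v - 1))
            = (1 + 3 * x) ^ 2 * u).
{ assert (E1 : H * (1 + 3 * x) = (1 + 3 * x) + x * (INR (S (S m)) * H + x * (G1 + Gk'))).
  { rewrite -Hsum HH. ring. }
  replace (H * ((1 + 3 * x) ^ 2 * u - INR (S (S m)) * x * (1 + 3 * x) * u - 2 * x ^ 2 * (u - v - 1)))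
    with ((1 + 3 * x) * u * (H * (1 + 3 * x)) - INR (S (S m)) * x * (1 + 3 * x) * u * H
          - x ^ 2 * (2 * H * (u - v - 1))) by ring.
  rewrite E1 -E2. ring. }
replace (1 - INR (S (S m)) * x / (1 + 3 * x) - 2 * x ^ 2 / (1 + 3 * x) ^ 2 * ((u - v - 1) / u))
  with (((1 + 3 * x) ^ 2 * u - INR (S (S m)) * x * (1 + 3 * x) * u - 2 * x ^ 2 * (u - v - 1))
        / ((1 + 3 * x) ^ 2 * u)) by (field; auto).
rewrite /Rdiv -Rmult_assoc N. field. split; auto.
Qed.

From Coquelicot Require Import Coquelicot.


Lemma INR_expn k n : INR (expn k n) = INR k ^ n.
Proof.
elim: n => [|n IH]; first by rewrite expn0.
by rewrite expnS -multE mult_INR IH.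
Qed.

Lemma U_growth y : 3/2 <= Rabs y -> forall m, 1 <= Rabs (U m y) /\ 2 * Rabs (U m y) <= Rabs (U (S m) y).
Proof.
move=> hy; elim => [|m [IH1 IH2]].
  rewrite U0 U1 Rabs_R1 Rabs_mult Rabs_right; lra.
split; first lra.
rewrite U_rec.
have h1 := Rabs_triang_inv (2 * y * U (S m) y) (U m y).
rewrite !Rabs_mult (Rabs_right 2) in h1; last lra.
have h2 : 3 * Rabs (U (S m) y) <= 2 * Rabs y * Rabs (U (S m) y).
  apply Rmult_le_compat_r; [apply Rabs_pos|lra].
lra.
Qed.

Definition gr k x j n := INR (g k n j) * x ^ n.

Lemma gr_ex k x j : INR k * Rabs x < 1 -> ex_series (gr k x j).
Proof.
move=> hx.
apply: (@ex_series_le R_AbsRing R_CompleteNormedModule _ (fun n => (INR k * Rabs x) ^ n)); last first.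
  apply: ex_series_geom. rewrite Rabs_right; [lra|].
  apply Rle_ge, Rmult_le_pos; [apply pos_INR|apply Rabs_pos].
move=> n. change (norm (gr k x j n)) with (Rabs (gr k x j n)).
rewrite /gr Rabs_mult Rabs_right; last by apply Rle_ge, pos_INR.
rewrite -RPow_abs Rpow_mult_distr.
apply Rmult_le_compat_r; first by apply pow_le, Rabs_pos.
rewrite -INR_expn; apply le_INR; apply/leP; exact: g_le.
Qed.

Lemma is_series_zero (a : nat -> R) : (forall n, a n = 0) -> is_series a 0.
Proof.
move=> H.
have := @is_series_scal_l R_AbsRing R_NormedModule 0 (fun n => (1/2) ^ n) _ (is_series_geom (1/2) ltac:(rewrite Rabs_right; lra)).
change (scal 0 (/ (1 - 1/2))) with (0 * (/ (1 - 1/2))). rewrite Rmult_0_l.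
apply: is_series_ext => n. rewrite H. exact (Rmult_0_l _).
Qed.

Definition GG k x j := Series (gr k x j).

Lemma GG_is k x j : INR k * Rabs x < 1 -> is_series (gr k x j) (GG k x j).
Proof. move=> hx; apply: Series_correct; exact: gr_ex. Qed.

Lemma GG_out k x j : ~~ ((0 < j) && (j <= k))%nat -> GG k x j = 0.
Proof.
move=> hj; apply: is_series_unique; apply: is_series_zero => n.
by rewrite /gr g_out // Rmult_0_l.
Qed.

Lemma T_is k x m : INR k * Rabs x < 1 ->
  is_series (fun n => INR (\sum_(t < m) g k n t.+1) * x ^ n) (sumR m (fun t => GG k x (S t))).
Proof.
move=> hx; elim: m => [|m IH].
  by apply: is_series_zero => n; rewrite big_ord0 /= Rmult_0_l.
have := is_series_plus _ _ _ _ IH (GG_is k x (S m) hx).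
apply: is_series_ext => n.
rewrite big_ord_recr /= -plusE plus_INR /gr. change (plus ?a ?b) with (a + b). ring.
Qed.

Lemma GG_eq k x j : INR k * Rabs x < 1 -> (0 < j <= k)%nat ->
  GG k x j = 1 + x * (sumR k (fun t => GG k x (S t)) - GG k x (j - 1)%nat - GG k x j - GG k x (S j)).
Proof.
move=> hx hj.
rewrite {1}/GG Series_incr_1; last exact: gr_ex.
have -> : gr k x j 0 = 1 by rewrite /gr /= hj /=; ring.
congr (1 + _).
apply: is_series_unique.
have A := T_is k x k hx.
have B1 := GG_is k x (j - 1)%nat hx.
have B2 := GG_is k x j hx.
have B3 := GG_is k x (S j) hx.
have C := is_series_minus _ _ _ _ (is_series_minus _ _ _ _ (is_series_minus _ _ _ _ A B1) B2) B3.
have D := @is_series_scal_l R_AbsRing R_NormedModule x _ _ C.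
apply: (is_series_ext _ _ _ _ D) => n.
have E := f_equal INR (g_rec n hj).
rewrite -!plusE !plus_INR in E.
have ej : j.-1 = (j - 1)%nat by lia.
rewrite ej in E.
change (scal x (plus (plus (plus (INR (\sum_(t < k) g k n t.+1) * x ^ n) (opp (gr k x (j - 1) n)))
   (opp (gr k x j n))) (opp (gr k x j.+1 n))) = gr k x j (S n)).
rewrite /gr /=.
change (x * (INR (\sum_(t < k) g k n t.+1) * x ^ n + - (INR (g k n (j - 1)) * x ^ n) + - (INR (g k n j) * x ^ n) + - (INR (g k n j.+1) * x ^ n)) = INR (g k n.+1 j) * (x * x ^ n)).
rewrite -E. ring.
Qed.

Lemma H_is k x : INR k * Rabs x < 1 ->
  is_series (fun n => INR (h n k) * x ^ n) (1 + x * sumR k (fun t => GG k x (S t))).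
Proof.
move=> hx.
apply: is_series_decr_1.
have D := @is_series_scal_l R_AbsRing R_NormedModule x _ _ (T_is k x k hx).
have -> : plus (1 + x * sumR k (fun t => GG k x (S t))) (opp (INR (h 0 k) * x ^ 0)) =
   scal x (sumR k (fun t => GG k x (S t))).
  rewrite h0 /=. change ((1 + x * sumR k (fun t => GG k x (S t))) + - (1 * 1) = x * sumR k (fun t => GG k x (S t))). ring.
apply: (is_series_ext _ _ _ _ D) => n.
rewrite hS /=. change (x * (INR (\sum_(t < k) g k n t.+1) * x ^ n) = INR (\sum_(t < k) g k n t.+1) * (x * x ^ n)). ring.
Qed.
Close Scope R_scope.

Theorem mainTheorem3 (k : nat) (hk : (2 <= k)%nat) :
  exists r : R, (0 < r)%R /\
  forall x : R, (0 < Rabs x < r)%R ->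
    let y := (- ((1 + x) / (2 * x)))%R in
    let D := (1 - INR k * x / (1 + 3 * x)
              - (2 * x ^ 2) / ((1 + 3 * x) ^ 2)
                * ((U k y - U (k - 1) y - 1) / U k y))%R in
    (1 + 3 * x <> 0)%R /\ U k y <> 0%R /\ D <> 0%R /\
    infinite_sum (fun n => (INR (h n k) * x ^ n)%R) (/ D)%R.
Proof.
have hk2 : (2 <= INR k)%R by apply: (le_INR 2); apply/leP.
exists (/ (4 * INR k))%R; split.
  apply Rinv_0_lt_compat; lra.
move=> x [hx0 hxr] y D.
have hkx : (INR k * Rabs x < 1/4)%R.
  have := Rmult_lt_compat_l (INR k) _ _ ltac:(lra) hxr.
  have -> : (INR k * / (4 * INR k) = 1/4)%R by field; lra.
  done.
have hx4 : (Rabs x < 1/4)%R by nra.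
have hx : x <> 0%R by move=> e; rewrite e Rabs_R0 in hx0; lra.
have h3 : (1 + 3 * x <> 0)%R.
  move=> e; have : x = (-1/3)%R by lra. move=> e2; rewrite e2 Rabs_left in hx4; lra.
have hy : (3/2 <= Rabs y)%R.
  have e : (Rabs y * (2 * Rabs x) = Rabs (1 + x))%R.
    rewrite -(Rabs_right 2); last lra.
    rewrite -!Rabs_mult -(Rabs_Ropp (1 + x)). congr Rabs. rewrite /y. field. exact hx.
  have : (1 - Rabs x <= Rabs (1 + x))%R.
    have := Rabs_triang_inv 1 (- x). rewrite Rabs_R1 Rabs_Ropp. 
    have -> : (1 - - x = 1 + x)%R by ring. lra.
  move=> h1. nra.
have hu : U k y <> 0%R.
  have [h1 _] := U_growth y hy k. move=> e; rewrite e Rabs_R0 in h1; lra.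
have hkx' : (INR k * Rabs x < 1)%R by lra.
set T := sumR k (fun t => GG k x (S t)).
have HD : ((1 + x * T) * D = 1)%R.
  apply: (main_alg k x (1 + x * T) T (GG k x) hk hx h3 hu).
  - by apply: GG_out.
  - apply: GG_out; apply/negP; lia.
  - move=> j hj; exact: GG_eq.
  - by [].
  - by [].
have hD : D <> 0%R by move=> e; rewrite e Rmult_0_r in HD; lra.
split; first exact h3.
split; first exact hu.
split; first exact hD.
apply/is_series_Reals.
have -> : (/ D = 1 + x * T)%R.
  apply: (Rmult_eq_reg_r D); last exact hD.
  by rewrite Rinv_l // HD.
exact: H_is.
Qed.
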